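(* Let $X$ be a compact Hausdorff space, $(E,X,\pi)$ a bundle of complete metric spaces bounded by $k$, $\mu$ an ultrafilter on $X$ converging to $x$, and $f\in E_x$. For an open neighbourhood $W$ of $f$ let $A_W=\{(b_y)_{y\in X}\in\int_XE_y\,d\mu:\ \exists U\in\mu,\ \exists\epsilon>0,\ \coprod_{y\in U}B(b_y,\epsilon)\subseteq W\}$. Then each $A_W$ is nonempty, $A_W\cap A_{W'}=A_{W\cap W'}$, and the filter on $\int_XE_y\,d\mu$ generated by $\{A_W: W \text{ open neighbourhood of } f\}$ is a Cauchy filter; denote its limit by $\sigma_\mu(f)$. The resulting map $\sigma_\mu:E_x\to\int_XE_y\,d\mu$ is 1-Lipschitz.
   Context: Metric ultraproduct: for an ultrafilter $\mu$ on $X$ and complete metric spaces $E_y$ with distances $\le k$, $\int_XE_y\,d\mu=\prod_yE_y/\sim$ with $(a_y)\sim(b_y)$ iff $\lim_\mu d(a_y,b_y)=0$ and metric $\lim_\mu d(a_y,b_y)$; classes may be represented by families defined on a set of $\mu$; it is complete. $B(b,\epsilon)$ is the open ball in the fibre of $b$. Bundle definition: for a surjection $\pi:E\to X$ with metric fibres $E_x$, $E\times_XE$ has the subspace topology of $E\times E$, global distance $d(f,g)=d_{\pi(f)}(f,g)$; $V_\epsilon=\{f:\exists g\in V,\pi f=\pi g,d(f,g)<\epsilon\}$; $V\subseteq_\epsilon W$ means $V\subseteq V_\epsilon\subseteq W$. A bundle of complete metric spaces bounded by $k$ over $X$ is $(E,X,\pi)$ with all fibres complete with distances $\le k$ such that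 (1) $d:E\times_XE\to[0,k]$ is upper semicontinuous ($d^{-1}([0,r))$ open for all $r$); (2) $\pi$ is continuous and open; (3) for every open $W$ and $f\in W$ there are an open neighbourhood $V$ of $f$ and $\epsilon>0$ with $V\subseteq_\epsilon W$. *)

(* Defs.v *)
From HB Require Import structures.
From mathcomp Require Import all_boot all_order all_algebra.
From mathcomp Require Import all_classical all_reals all_analysis.
Set Implicit Arguments. Unset Strict Implicit. Unset Printing Implicit Defensive.
Import Order.TTheory GRing.Theory Num.Theory.
Import numFieldTopology.Exports numFieldNormedType.Exports.
Local Open Scope classical_set_scope.
Local Open Scope ring_scope.

Section Bundle.
Context {R : realType} {X E : topologicalType}.
Variables (pi : E -> X) (d : E -> E -> R) (k : R).

Definition fibprod : set (E * E) := [set p | pi p.1 = pi p.2].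

Definition thicken (V : set E) (eps : R) : set E :=
  [set f | exists2 g, V g & pi f = pi g /\ d f g < eps].

Definition eps_sub (V W : set E) (eps : R) : Prop :=
  V `<=` thicken V eps /\ thicken V eps `<=` W.

Definition fibre_metric : Prop :=
  (forall f g, pi f = pi g -> 0 <= d f g <= k) /\
  (forall f g, pi f = pi g -> d f g = d g f) /\
  (forall f g, pi f = pi g -> d f g = 0 <-> f = g) /\
  (forall f g h, pi f = pi g -> pi g = pi h -> d f h <= d f g + d g h).

Definition fibre_complete : Prop :=
  forall (y : X) (u : nat -> E), (forall n, pi (u n) = y) ->
  (forall eps : R, 0 < eps -> exists N : nat, forall m n : nat,
      (N <= m)%N -> (N <= n)%N -> d (u m) (u n) < eps) ->
  exists2 l, pi l = y &
    (forall eps : R, 0 < eps -> exists N : nat, forall n : nat,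
      (N <= n)%N -> d (u n) l < eps).

Definition bundle : Prop :=
  [/\ pi @` setT = setT,
      fibre_metric /\ fibre_complete,
      (* (1) d : E x_X E -> [0,k] is upper semicontinuous for the subspace
             topology induced by E * E *)
      (forall r : R, exists2 O : set (E * E), open O &
          O `&` fibprod = [set p | fibprod p /\ d p.1 p.2 < r]),
      continuous pi /\ (forall U : set E, open U -> open (pi @` U)) &
      (forall (W : set E) (f : E), open W -> W f ->
         exists V : set E, exists eps : R,
           [/\ open V, V f, 0 < eps & eps_sub V W eps])].

(* Elements of the ultraproduct \int_X E_y dmu are represented by sections
   (families (b_y)_y with b_y in E_y); two sections a, b are identified when
   up_dist a b = 0, and up_dist is the metric of the ultraproduct. *)
Definition section (b : X -> E) : Prop := forall y, pi (b y) = y.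

Definition up_dist (mu : set_system X) (a b : X -> E) : R :=
  lim ((fun y => d (a y) (b y)) @ mu).

Definition A_set (mu : set_system X) (W : set E) (b : X -> E) : Prop :=
  exists U : set X, mu U /\ exists2 eps : R, 0 < eps &
    forall y e, U y -> pi e = y -> d (b y) e < eps -> W e.

(* s represents the limit of the filter generated by the A_W, W open
   neighbourhood of f *)
Definition is_sigma_limit (mu : set_system X) (f : E) (s : X -> E) : Prop :=
  section s /\
  forall eps : R, 0 < eps -> exists W : set E, [/\ open W, W f &
     forall b, section b -> A_set mu W b -> up_dist mu b s < eps].

End Bundle.

(* Main.v *)
Require Import Defs.
From HB Require Import structures.
From mathcomp Require Import all_boot all_order all_algebra.
From mathcomp Require Import all_classical all_reals all_analysis.
From mathcomp Require Import lra.
Import Order.TTheory GRing.Theory Num.Theory.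
Import numFieldTopology.Exports numFieldNormedType.Exports.
Local Open Scope classical_set_scope.
Local Open Scope ring_scope.

Lemma ultra_bdd_cvg (R : realType) (X : Type) (mu : set_system X)
  (muU : UltraFilter mu) (u : X -> R) (k : R) :
  (forall y, 0 <= u y <= k) -> cvg (u @ mu).
Proof.
move=> ub.
have muk : (u @ mu) `[0, k]%classic.
  apply: (@filterS _ mu _ setT) => [y _ /=|]; last exact: filterT.
  rewrite in_itv /=.
  exact: ub.
have [p [_ cp]] := @segment_compact R 0 k (u @ mu) _ muk.
apply/cvg_ex; exists p => N Np.
have [//|mC] := in_ultra_setVsetC (u @^-1` N) muU.
have [z [/= nz zN]] := cp (~` N) N mC Np.
by case: nz.
Qed.

Lemma archiN (R : realType) (e : R) : 0 < e -> exists N : nat, N.+1%:R^-1 < e.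
Proof.
move=> e0; have [N _ HN] := near_infty_natSinv_lt (PosNum e0).
by exists N; apply: (HN N) => /=.
Qed.

Section T.
Context (R : realType) (X E : topologicalType).
Lemma usc_pair (pi : E -> X) (d : E -> E -> R) (r : R) (Ob : set (E * E))
  (oO : open Ob) (eO : Ob `&` fibprod pi = [set p | fibprod pi p /\ d p.1 p.2 < r])
  (g h : E) : pi g = pi h -> d g h < r ->
  exists G H : set E, [/\ open G, G g, open H, H h &
    forall g' h', G g' -> H h' -> pi g' = pi h' -> d g' h' < r].
Proof.
move=> pgh dgh.
have Ogh : Ob (g, h).
  have : (Ob `&` fibprod pi) (g, h) by rewrite eO.
  by case.
have : nbhs (g, h) Ob by apply: open_nbhs_nbhs.
case=> [[A B] /= [nA nB] sAB].
move: nA; rewrite nbhsE => -[G [oG Gg] sGA].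
move: nB; rewrite nbhsE => -[H [oH Hh] sHB].
exists G, H; split => // g' h' Gg' Hh' pe.
have : (Ob `&` fibprod pi) (g', h').
  by split => //; apply: sAB; split; [apply: sGA|apply: sHB].
by rewrite eO => -[].
Qed.
End T.

Theorem theorem4p1 (R : realType) (X E : topologicalType)
  (pi : E -> X) (d : E -> E -> R) (k : R)
  (Xcpt : compact [set: X]) (Xhaus : hausdorff_space X)
  (Hbundle : bundle pi d k)
  (mu : set_system X) (muU : UltraFilter mu) (x : X) (mux : mu --> x)
  (f : E) (fx : pi f = x) :
  (* each A_W is nonempty *)
  (forall W : set E, open W -> W f ->
     exists b, section pi b /\ A_set pi d mu W b) /\
  (* A_W \cap A_W' = A_{W \cap W'} *)
  (forall W W' : set E, open W -> W f -> open W' -> W' f ->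
     forall b, section pi b ->
       (A_set pi d mu W b /\ A_set pi d mu W' b <-> A_set pi d mu (W `&` W') b)) /\
  (* the generated filter is Cauchy *)
  (forall eps : R, 0 < eps -> exists W : set E, [/\ open W, W f &
     forall a b, section pi a -> section pi b ->
       A_set pi d mu W a -> A_set pi d mu W b -> up_dist d mu a b < eps]) /\
  (* it has a limit sigma_mu(f) *)
  (exists s, is_sigma_limit pi d mu f s) /\
  (* sigma_mu : E_x -> \int E_y dmu is 1-Lipschitz *)
  (forall g h s t, pi g = x -> pi h = x ->
     is_sigma_limit pi d mu g s -> is_sigma_limit pi d mu h t ->
     up_dist d mu s t <= d g h).
Proof.
case: Hbundle => surj [[dm [dsym [d0 dtri]]] dcpl] usc [picont piopen] H3.
have fI : forall P Q : set X, mu P -> mu Q -> mu (P `&` Q).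
  by move=> P Q; exact: filterI.
have fS : forall P Q : set X, P `<=` Q -> mu P -> mu Q.
  by move=> P Q; exact: filterS.
have dself : forall e, d e e = 0 by move=> e; exact: (proj2 (d0 e e erefl)).
have cvgS : forall a b, section pi a -> section pi b ->
    cvg ((fun y => d (a y) (b y)) @ mu).
  move=> a b sa sb; apply: (@ultra_bdd_cvg R X mu muU _ k) => y.
  by apply: dm; rewrite sa sb.
have L1 : forall a b r, section pi a -> section pi b ->
    up_dist d mu a b < r -> \forall y \near mu, d (a y) (b y) < r.
  move=> a b r sa sb; exact: (cvgr_lt _ (cvgS a b sa sb)).
have L2 : forall a b r, section pi a -> section pi b ->
    (\forall y \near mu, d (a y) (b y) <= r) -> up_dist d mu a b <= r.
  move=> a b r sa sb ev; exact: (limr_le (cvgS a b sa sb) ev).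
have Aev : forall W b, section pi b -> A_set pi d mu W b ->
    \forall y \near mu, W (b y).
  move=> W b sb [U [mU [e e0 hU]]]; move: mU; apply: fS => y Uy.
  by apply: (hU y) => //; rewrite dself.
have Pd : forall p r, 0 < r -> exists W, [/\ open W, W p &
    forall g h, W g -> W h -> pi g = pi h -> d g h < r].
  move=> p r r0; have [Ob oO eO] := usc r.
  have dr : d p p < r by rewrite dself.
  have [G [H [oG Gp oH Hp hGH]]] := @usc_pair R X E pi d r Ob oO eO p p (erefl (pi p)) dr.
  exists (G `&` H); split; [exact: openI|by []|].
  move=> g h [Gg _] [_ Hh]; exact: hGH.
have P1 : forall p W, pi p = x -> open W -> W p ->
    exists b, section pi b /\ A_set pi d mu W b.
  move=> p W px oW Wp; have [V [e [oV Vp e0 [_ tW]]]] := H3 W p oW Wp.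
  have mV : mu (pi @` V).
    apply: mux; apply: open_nbhs_nbhs; split; [exact: piopen|by exists p].
  have : forall y, exists e', pi e' = y /\ ((pi @` V) y -> V e').
    move=> y; have [[g Vg <-]|nV] := pselect ((pi @` V) y).
      by exists g; split.
    have : (pi @` setT) y by rewrite surj.
    by case=> g _ pg; exists g; split => // Hy; case: (nV Hy).
  case/choice => b hb; exists b; split; first by move=> y; case: (hb y).
  exists (pi @` V); split => //; exists e => // y e' Vy pe de.
  apply: tW; exists (b y); first exact: (proj2 (hb y)).
  split; first by rewrite pe (proj1 (hb y)).
  by rewrite dsym // pe (proj1 (hb y)).
have P2 : forall W W' b, section pi b -> (A_set pi d mu W b /\
    A_set pi d mu W' b <-> A_set pi d mu (W `&` W') b).
  move=> W W' b sb; split.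
    case=> -[U [mU [e e0 hU]]] [U' [mU' [e' e0' hU']]].
    exists (U `&` U'); split; first exact: filterI.
    exists (Num.min e e'); first by rewrite lt_min e0 e0'.
    move=> y g [Uy U'y] pg; rewrite lt_min => /andP[h1 h2].
    by split; [exact: hU h1|exact: hU' h2].
  case=> U [mU [e e0 hU]]; split; exists U; split => //; exists e => //.
    by move=> y g Uy pg dg; case: (hU y g Uy pg dg).
  by move=> y g Uy pg dg; case: (hU y g Uy pg dg).
have P3 : forall eps, 0 < eps -> exists W, [/\ open W, W f &
    forall a b, section pi a -> section pi b -> A_set pi d mu W a ->
    A_set pi d mu W b -> up_dist d mu a b < eps].
  move=> eps e0; have e2 : 0 < eps / 2 by rewrite divr_gt0.
  have [W [oW Wf hW]] := Pd f (eps / 2) e2.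
  exists W; split => // a b sa sb Aa Ab.
  apply: (le_lt_trans (L2 a b (eps/2) sa sb _)); last by lra.
  have := fI _ _ (Aev W a sa Aa) (Aev W b sb Ab).
  apply: fS => y [Wa Wb]; apply/ltW/hW => //; by rewrite sa sb.
have : forall W, exists p : set E * R, open W -> W f ->
    [/\ open p.1, p.1 f, 0 < p.2 & eps_sub pi d p.1 W p.2].
  move=> W; have [[oW Wf]|n] := pselect (open W /\ W f).
    by have [V [e h]] := H3 W f oW Wf; exists (V, e).
  by exists (set0, 0) => oW Wf; exfalso; apply: n.
case/choice => VE hVE.
have : forall n : nat, exists W, [/\ open W, W f &
    forall g h, W g -> W h -> pi g = pi h -> d g h < n.+1%:R^-1].
  by move=> n; apply: Pd; rewrite invr_gt0 ltr0n.
case/choice => Wr hWr.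
pose Wn := fix Wn (n : nat) : set E :=
  if n is m.+1 then Wr n `&` (VE (Wn m)).1 else Wr 0%N.
have Wok : forall n, open (Wn n) /\ Wn n f.
  elim => [|n [oW Wf]] /=; first by case: (hWr 0%N).
  have [oV Vf _ _] := hVE _ oW Wf; case: (hWr n.+1) => o1 f1 _.
  by split; [exact: openI|by split].
pose Vn n := (VE (Wn n)).1.
pose en n := (VE (Wn n)).2.
have hV : forall n, [/\ open (Vn n), Vn n f, 0 < en n &
    eps_sub pi d (Vn n) (Wn n) (en n)].
  by move=> n; case: (Wok n) => oW Wf; exact: hVE.
have VW : forall n, Vn n `<=` Wn n.
  by move=> n g Vg; case: (hV n) => _ _ _ [s t]; exact: t (s g Vg).
have Vsub : forall n m, (n <= m)%N -> Vn m `<=` Vn n.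
  move=> n; elim => [|m IH]; first by rewrite leqn0 => /eqP ->.
  rewrite leq_eqVlt => /orP[/eqP -> //|]; rewrite ltnS => nm g Vg.
  apply: IH nm _ _.
  by have /= [] := VW m.+1 g Vg.
have Wdiam : forall n g h, Wn n g -> Wn n h -> pi g = pi h ->
    d g h < n.+1%:R^-1.
  move=> [|n] g h /=.
    by case: (hWr 0%N) => _ _ hd; exact: hd.
  by case=> W1 _ [W2 _]; case: (hWr n.+1) => _ _ hd; exact: hd.
have mP : forall n, mu (pi @` Vn n).
  move=> n; case: (hV n) => oV Vf _ _.
  apply: mux; apply: open_nbhs_nbhs; split; [exact: piopen|by exists f].
have Pdec : forall n m, (n <= m)%N -> pi @` Vn m `<=` pi @` Vn n.
  by move=> n m nm _ [g Vg <-]; exists g => //; exact: Vsub nm _ Vg.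
have fin : forall y n0, exists e, pi e = y /\
    forall n, (n < n0)%N -> (pi @` Vn n) y -> Wn n e.
  move=> y; elim => [|n0 [e [pe IH]]].
    have : (pi @` setT) y by rewrite surj.
    by case=> g _ <-; exists g.
  have [[g Vg pg]|nP] := pselect ((pi @` Vn n0) y).
    exists g; split => // n; rewrite ltnS => nn0 _; apply: VW.
    exact: Vsub nn0 _ Vg.
  exists e; split => // n; rewrite ltnS leq_eqVlt.
  by case/orP => [/eqP -> /nP //|]; exact: IH.
have lim_case : forall y, (forall n, (pi @` Vn n) y) ->
    exists e, pi e = y /\ forall n, Wn n e.
  move=> y allP.
  have : forall n, exists g, Vn n g /\ pi g = y.
    by move=> n; case: (allP n) => g Vg pg; exists g.
  case/choice => g hg.
  have cauchy : forall eps : R, 0 < eps -> exists N : nat, forall m n : nat,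
      (N <= m)%N -> (N <= n)%N -> d (g m) (g n) < eps.
    move=> eps e0; have [N hN] := @archiN R eps e0; exists N => m n Nm Nn.
    apply: lt_trans hN; apply: (Wdiam N).
    - by apply: VW; exact: Vsub Nm _ (hg m).1.
    - by apply: VW; exact: Vsub Nn _ (hg n).1.
    - by rewrite (hg m).2 (hg n).2.
  have [l pl hl] := dcpl y g (fun n => (hg n).2) cauchy.
  exists l; split => // n.
  case: (hV n) => _ _ en0 [_ tW]; apply: tW.
  have [N hN] := hl _ en0.
  exists (g (maxn n N)); first exact: Vsub (leq_maxl n N) _ (hg _).1.
  split; first by rewrite pl (hg _).2.
  rewrite dsym; first exact: hN (leq_maxr n N).
  by rewrite pl (hg _).2.
have : forall y, exists e, pi e = y /\ forall n, (pi @` Vn n) y -> Wn n e.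
  move=> y; have [allP|] := pselect (forall n, (pi @` Vn n) y).
    by have [e [pe he]] := lim_case y allP; exists e; split => // n _.
  move=> /existsNP [n0 nP].
  have [e [pe he]] := fin y n0; exists e; split => // n Pn; apply: he => //.
  rewrite ltnNge; apply/negP => n0n; apply: nP; exact: Pdec n0n _ Pn.
case/choice => s hs.
have ss : section pi s by move=> y; case: (hs y).
have Slim : forall p t, pi p = x -> is_sigma_limit pi d mu p t ->
  forall eps, 0 < eps -> exists W, [/\ open W, W p &
    forall b, section pi b -> A_set pi d mu W b ->
    \forall y \near mu, d (b y) (t y) < eps].
  move=> p t pp [st Lt] eps e0; have [W [oW Wp hW]] := Lt eps e0.
  by exists W; split => // b sb Ab; apply: L1 => //; exact: hW.
split; first by move=> W oW Wf; exact: (P1 f W fx oW Wf).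
split; first by move=> W W' _ _ _ _ b sb; exact: P2.
split; first exact: P3.
split.
  exists s; split => // eps e0; have [m hm] := @archiN R eps e0.
  have [oW Wf] := Wok m.
  exists (Wn m); split => // b sb Ab.
  apply: le_lt_trans hm; apply: L2 => //.
  have := fI _ _ (Aev _ b sb Ab) (mP m).
  apply: fS => y [Wb Py]; apply/ltW/(Wdiam m) => //.
    exact: (hs y).2.
  by rewrite sb (hs y).1.
move=> g h s' t' pg ph Ls Lt.
have ss' : section pi s' by case: Ls.
have st' : section pi t' by case: Lt.
apply/ler_addgt0Pr => eps e0.
have e3 : 0 < eps / 3 by rewrite divr_gt0.
have [Wg [oWg Wgg hWg]] := Slim g s' pg Ls _ e3.
have [Wh [oWh Whh hWh]] := Slim h t' ph Lt _ e3.
have [Ob oO eO] := usc (d g h + eps / 3).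
have dl : d g h < d g h + eps / 3 by lra.
have [G [H [oG Gg oH Hh hGH]]] := @usc_pair R X E pi d _ Ob oO eO g h (etrans pg (esym ph)) dl.
have [a [sa Aa]] := P1 g (Wg `&` G) pg (openI oWg oG) (conj Wgg Gg).
have [b [sb Ab]] := P1 h (Wh `&` H) ph (openI oWh oH) (conj Whh Hh).
have [Aa1 Aa2] := (proj2 (P2 _ _ a sa)) Aa.
have [Ab1 Ab2] := (proj2 (P2 _ _ b sb)) Ab.
apply: L2 => //.
have := fI _ _ (fI _ _ (hWg a sa Aa1) (hWh b sb Ab1))
  (fI _ _ (Aev _ a sa Aa2) (Aev _ b sb Ab2)).
apply: fS => y [[da db] [Ga Hb]].
have dab : d (a y) (b y) < d g h + eps / 3 by apply: hGH; rewrite // sa sb.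
have t1 := dtri (s' y) (a y) (t' y) (etrans (ss' y) (esym (sa y)))
  (etrans (sa y) (esym (st' y))).
have t2 := dtri (a y) (b y) (t' y) (etrans (sa y) (esym (sb y)))
  (etrans (sb y) (esym (st' y))).
have e1 : d (s' y) (a y) = d (a y) (s' y) by apply: dsym; rewrite ss' sa.
have e2 : d (b y) (t' y) < eps / 3 := db.
lra.
Qed.
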